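(* Let $Z$ be a decision structure. Every quotient graph in the module decomposition of $Z$ is either prime or a directed path with at least three nodes all of whose arcs carry the same label.
   Context: A decision structure is a finite directed acyclic graph $Z=(N,A)$, $A\subseteq N\times N$, with a unique source, together with an arc labelling $\ell:A\to\mathcal{R}$ (into a set $\mathcal{R}$ of return values) and a node labelling by actions, such that distinct arcs leaving the same node have distinct labels; the arc out of $v$ labelled $r$, if it exists, is the $r$-arc out of $v$. For $X\subseteq N$, $Z[X]$ is the induced subgraph with inherited labels. A subset $X\subseteq N(Z)$ is a module of $Z$ if $Z[X]$ has a unique source and for every node $v\notin X$: (i) every arc from $v$ to a node of $X$ ends at the source of $Z[X]$; (ii) if for some $x\in X$ there is an arc from $x$ to $v$ labelled $r$, then every $x'\in X$ has an $r$-arc, and it ends either at $v$ or in $X$. Modules $N(Z)$ and $\{v\}$ are trivial; $Z$ is prime if all its modules are trivial. A module is maximal if it is a proper subset of $N(Z)$ contained in no module other than itself and $N(Z)$. A modular partition is a partition of $N(Z)$ into modules; it is maximal if all blocks are maximal modules. For a partition $P$ of $N(Z)$, the quotient $Z/P$ has node set $P$ and an arc $(S,T)$, $S\neq T$, labelled $r$ whenever some $r$-labelled arc goes from $S$ to $T$; the $Z[S]$, $S\in P$, are the factors. A directed path with $m$ nodes has nodes $u_1,\dots,u_m$ and arcs exactly $(u_i,u_{i+1})$; its length is $m-1$. Module decomposition: for $Z$ with at least two nodes, exactly one of the following holds: (1) $Z$ has a unique maximal partition; (2) there is a unique modular partition $P$ such that $Z/P$ is a directed path with at least three nodes whose arcs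 all carry the same label and whose length is maximal among modular partitions $R$ with $Z/R$ a path. Let $P$ be the partition of (1) or (2) accordingly. The module decomposition of $Z$ consists of the quotient $Z/P$ together with (recursively) the module decompositions of all factors $Z[S]$, $S\in P$, with at least two nodes; a one-node structure has empty decomposition. The quotient graphs in the module decomposition are all the quotients produced in this recursion. *)

(* Defs.v *)
From mathcomp Require Import all_boot.
Set Implicit Arguments. Unset Strict Implicit. Unset Printing Implicit Defensive.

(* Arcs are labelled triples (u, v, r); several arcs with different
   labels between the same pair are allowed (needed for quotients). Only arcs
   between nodes of [gnodes] are ever considered. *)
Record lgraph (U : finType) (R : Type) := LGraph {
  gnodes : {set U};
  garc : U -> U -> R -> Prop }.

Section LGraphDefs.
Variables (U : finType) (R : Type).
Implicit Types (G : lgraph U R) (X Y : {set U}) (P : {set {set U}}).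

Definition edge G (u v : U) : Prop := exists r, garc G u v r.

Definition is_source G X (x : U) : Prop :=
  x \in X /\ forall y, y \in X -> ~ edge G y x.

Definition is_module G X : Prop :=
  X \subset gnodes G /\
  exists s, (is_source G X s /\ forall x, is_source G X x -> x = s) /\
    forall v, v \in gnodes G -> v \notin X ->
      (forall x, x \in X -> edge G v x -> x = s) /\
      (forall x r, x \in X -> garc G x v r ->
         forall x', x' \in X ->
           (exists w, w \in gnodes G /\ garc G x' w r) /\
           (forall w, w \in gnodes G -> garc G x' w r -> w = v \/ w \in X)).

Definition trivial_module G X : Prop :=
  X = gnodes G \/ exists v, X = [set v].

Definition prime_graph G : Prop := forall X, is_module G X -> trivial_module G X.

Definition maximal_module G X : Prop :=
  [/\ is_module G X, X \proper gnodes G &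
      forall Y, is_module G Y -> X \subset Y -> Y = X \/ Y = gnodes G].

Definition modular_partition G P : Prop :=
  partition P (gnodes G) /\ forall S, S \in P -> is_module G S.

Definition maximal_partition G P : Prop :=
  partition P (gnodes G) /\ forall S, S \in P -> maximal_module G S.

Definition sub G X : lgraph U R := LGraph X (garc G).

Definition quotient G P : lgraph {set U} R :=
  LGraph P (fun S T r => S <> T /\
                         exists u v, [/\ u \in S, v \in T & garc G u v r]).

Definition dipath_seq G (s : seq U) : Prop :=
  [/\ uniq s, gnodes G =i s &
      forall a b, a \in gnodes G -> b \in gnodes G ->
        (edge G a b <-> exists s1 s2, s = s1 ++ a :: b :: s2)].

Definition is_dipath G : Prop := exists s, dipath_seq G s.

Definition path3_same G : Prop :=
  (exists s, dipath_seq G s /\ 3 <= size s) /\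
  exists r, forall a b r', a \in gnodes G -> b \in gnodes G ->
                           garc G a b r' -> r' = r.

End LGraphDefs.

Section Decomp.
Variables (U : finType) (R : Type).
Implicit Types (G : lgraph U R) (X Y : {set U}) (P : {set {set U}}).

(* the partition of case (2): quotient a same-label path with >= 3 nodes,
   of maximal length (= #|P| - 1) among modular partitions with path quotient *)
Definition path_partition G P : Prop :=
  [/\ modular_partition G P, path3_same (quotient G P) &
      forall Q, modular_partition G Q -> is_dipath (quotient G Q) ->
                #|Q| <= #|P| ].

Definition unique_maximal_partition G P : Prop :=
  maximal_partition G P /\ forall Q, maximal_partition G Q -> Q = P.

Definition decomp_partition G P : Prop :=
  2 <= #|gnodes G| /\
  (unique_maximal_partition G P \/
   (~ (exists Q, unique_maximal_partition G Q) /\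
    path_partition G P /\ forall Q, path_partition G Q -> Q = P)).

(* node sets X such that G[X] is decomposed in the module decomposition of G *)
Inductive in_decomp G : {set U} -> Prop :=
  | in_decomp_root : in_decomp G (gnodes G)
  | in_decomp_sub X P S : in_decomp G X -> decomp_partition (sub G X) P ->
      S \in P -> 2 <= #|S| -> in_decomp G S.

End Decomp.

(* Decision structure on node type T, arcs [adj], arc labels [lab]
   (meaningful on arcs only), node labelling by actions irrelevant here. *)
Definition is_decision_structure (T : finType) (R : Type)
    (adj : rel T) (lab : T -> T -> R) : Prop :=
  [/\ (forall x y, adj x y -> ~~ connect adj y x),
      (exists! s, forall y, ~~ adj y s)
    & (forall u v w, adj u v -> adj u w -> lab u v = lab u w -> v = w)].

Definition dgraph (T : finType) (R : Type) (adj : rel T) (lab : T -> T -> R)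
  : lgraph T R := LGraph [set: T] (fun u v r => adj u v /\ lab u v = r).

(* Main.v *)
Require Import Defs.
From mathcomp Require Import all_boot.

Lemma blk_eq (U : finType) (P : {set {set U}}) B C x :
  trivIset P -> B \in P -> C \in P -> x \in B -> x \in C -> B = C.
Proof. by move=> tI BP CP xB xC; rewrite -(def_pblock tI BP xB) (def_pblock tI CP xC). Qed.

Arguments blk_eq {U P B C x}.
Lemma blk_ex (U : finType) (P : {set {set U}}) D x :
  partition P D -> x \in D -> exists2 B, B \in P & x \in B.
Proof.
case/and3P => /eqP hc _ _ xD; rewrite -hc in xD.
by exists (pblock P x); [exact: pblock_mem | rewrite mem_pblock].
Qed.

Arguments blk_ex {U P D x}.
Lemma quotient_prime (U : finType) (R : Type) (G : lgraph U R) P :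
  maximal_partition G P -> prime_graph (quotient G P).
Proof.
move=> [hpart hmax] M [/= MsubP [S0 [[[S0M S0src] S0uniq] Mcond]]].
have hpart' := hpart.
move: hpart' => /and3P [/eqP hcov htriv h0].
have inP : forall B, B \in M -> B \in P by move=> B; apply: (subsetP MsubP).
have subG : forall B, B \in P -> B \subset gnodes G.
  by move=> B BP; rewrite -hcov; apply/subsetP => y yB; apply/bigcupP; exists B.
have modP : forall B, B \in P -> is_module G B by move=> B BP; case: (hmax B BP).
have ne : forall B, B \in P -> exists y, y \in B.
  move=> B BP; apply/set0Pn; apply: contraNneq h0 => <-; exact: BP.
have [/eqP ->|MneP] := boolP (M == P); first by left.
case: (boolP [exists B in M, B != S0]) => [/exists_inP [B0 B0M B0neS0] | hno]; last first.
  right; exists S0; apply/setP=> B; rewrite inE; apply/idP/eqP => [BM|->//].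
  by apply/eqP; apply: (contraNT _ hno) => h; apply/exists_inP; exists B.
exfalso.
have [[S0sub [s0 [[s0src s0uniq] s0cond]]] _ S0maxl] := hmax S0 (inP _ S0M).
set Y := cover M.
have inY : forall y, reflect (exists2 B, B \in M & y \in B) (y \in Y).
  move=> y; apply: (iffP idP) => [/bigcupP [C CM yC]|[C CM yC]]; first by exists C.
  by apply/bigcupP; exists C.
have S0Y : S0 \subset Y by apply/subsetP => y yS0; apply/inY; exists S0.
have Ymod : is_module G Y.
  split.
    apply/subsetP => y /inY [C CM yC]; exact: (subsetP (subG _ (inP _ CM))).
  exists s0; split; first split.
  - split; first by apply/inY; exists S0 => //; case: s0src.
    move=> y /inY [C CM yC] [r hr].
    have [CS0|CneS0] := eqVneq C S0; first by subst C; apply: (s0src.2 y yC); exists r.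
    apply: (S0src C CM); exists r; split; first by apply/eqP.
    by exists y, s0; split => //; case: s0src.
  - move=> x [/inY [B BM xB] xsrc].
    have [Bsub [sB [[sBsrc sBuniq] sBcond]]] := (modP B (inP _ BM)).
    have xsB : x = sB.
      apply: sBuniq; split => // y yB; apply: xsrc; apply/inY; by exists B.
    have BS0 : B = S0.
      apply: S0uniq; split => // C CM [r [CneB [u [v [uC vB huv]]]]].
      have uG : u \in gnodes G by exact: (subsetP (subG _ (inP _ CM))).
      have unB : u \notin B.
        apply/negP => uB; exact: (CneB (blk_eq htriv (inP _ CM) (inP _ BM) uC uB)).
      have vx : v = x by rewrite xsB; apply: ((sBcond u uG unB).1 v vB); exists r.
      apply: (xsrc u); first by apply/inY; exists C.
      by exists r; rewrite -vx.
    subst B; apply: s0uniq; split => // y yS0; apply: xsrc; exact: (subsetP S0Y).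
  - move=> v vG vnY.
    have [C CP vC] := blk_ex hpart vG.
    have CnM : C \notin M by apply: contra vnY => CM; apply/inY; exists C.
    have vnS0 : v \notin S0 by apply: contra vnY; apply: (subsetP S0Y).
    split.
      move=> x /inY [B BM xB] [r hr].
      have BS0 : B = S0.
        apply: ((Mcond C CP CnM).1 B BM); exists r; split.
          by move=> CB; rewrite CB BM in CnM.
        by exists v, x.
      subst B; apply: ((s0cond v vG vnS0).1 x xB); by exists r.
    move=> x r /inY [B BM xB] hxv x' /inY [B' B'M x'B'].
    have BneC : B <> C by move=> BC; rewrite -BC BM in CnM.
    have [hex hall] := (Mcond C CP CnM).2 B r BM (conj BneC (ex_intro _ x (ex_intro _ v (And3 xB vC hxv)))) B' B'M.
    have [B'sub [sB' [_ sB'cond]]] := (modP B' (inP _ B'M)).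
    split.
      have [W [WP [WneB' [u [w [uB' wW huw]]]]]] := hex.
      have wG : w \in gnodes G by exact: (subsetP (subG _ WP)).
      have wnB' : w \notin B'.
        apply/negP => wB'; apply: WneB'; exact: (blk_eq htriv (inP _ B'M) WP wB' wW).
      exact: (((sB'cond w wG wnB').2 u r uB' huw x' x'B').1).
    move=> w wG hx'w; case: (boolP (w \in Y)) => [wY|wnY]; first by right.
    left.
    have [D DP wD] := blk_ex hpart wG.
    have DnM : D \notin M by apply: contra wnY => DM; apply/inY; exists D.
    have B'neD : B' <> D by move=> BD; rewrite -BD B'M in DnM.
    have [DC|DM] := hall D DP (conj B'neD (ex_intro _ x' (ex_intro _ w (And3 x'B' wD hx'w)))); last by rewrite DM in DnM.
    subst D.
    have [Csub [sC [_ sCcond]]] := (modP C CP).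
    have xG : x \in gnodes G by exact: (subsetP (subG _ (inP _ BM))).
    have x'G : x' \in gnodes G by exact: (subsetP (subG _ (inP _ B'M))).
    have xnC : x \notin C.
      apply/negP => xC; exact: (BneC (blk_eq htriv (inP _ BM) CP xB xC)).
    have x'nC : x' \notin C.
      apply/negP => xC; apply: B'neD; exact: (blk_eq htriv (inP _ B'M) CP x'B' xC).
    have -> : v = sC by apply: ((sCcond x xG xnC).1 v vC); exists r.
    by apply: ((sCcond x' x'G x'nC).1 w wD); exists r.
have [YS0|YG] := S0maxl Y Ymod S0Y.
  have [b bB] := ne B0 (inP _ B0M).
  have bS0 : b \in S0 by rewrite -YS0; apply/inY; exists B0.
  by move/eqP: B0neS0; apply; exact: (blk_eq htriv (inP _ B0M) (inP _ S0M) bB bS0).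
move/eqP: MneP; apply; apply/eqP; rewrite eqEsubset MsubP /=.
apply/subsetP => C CP; have [c cC] := ne C CP.
have : c \in Y by rewrite YG; exact: (subsetP (subG _ CP)).
move/inY => [B BM cB].
by rewrite -(blk_eq htriv (inP _ BM) CP cB cC).
Qed.

Theorem mainTheorem7 (T : finType) (R Act : Type) (adj : rel T)
    (lab : T -> T -> R) (act : T -> Act)
    (hZ : is_decision_structure adj lab) :
  forall (X : {set T}) (P : {set {set T}}),
    in_decomp (dgraph adj lab) X ->
    decomp_partition (sub (dgraph adj lab) X) P ->
    prime_graph (quotient (sub (dgraph adj lab) X) P) \/
    path3_same (quotient (sub (dgraph adj lab) X) P).
Proof.
move=> X P _ [_ [[hmp _] | [_ [[_ hp _] _]]]].
  by left; exact: quotient_prime.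
by right.
Qed.
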